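(* If $n\ge 1$ and $k\ge 3$ are integers, then the maximum degree of the $k$-Pell graph $\Pi_{n,k}$ is $\Delta(\Pi_{n,k})=2n$ and its minimum degree is $\delta(\Pi_{n,k})=\lceil n/2\rceil$.
   Context: For an integer $k\ge 2$, a $k$-Pell string is a finite word over the alphabet $\{0,1,\ldots,k-1,kk\}$, i.e. a word over $\{0,1,\ldots,k\}$ in which every maximal run of the letter $k$ has even length. For $n\ge 0$, the $k$-Pell graph $\Pi_{n,k}$ has as vertices all $k$-Pell strings of length $n$, and two vertices are adjacent if one is obtained from the other either by replacing a single letter $i$ by $i+1$ (or vice versa) for some $i\in\{0,1,\ldots,k-2\}$, or by replacing one factor $(k-1)(k-1)$ by $kk$ (or vice versa), in such a way that the resulting string is again a $k$-Pell string. *)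

(* Defs.v *)
From mathcomp Require Import all_boot.
Set Implicit Arguments. Unset Strict Implicit. Unset Printing Implicit Defensive.

(* Letters are natural numbers 0..k; the composite letter "kk" is the
   digit k written twice. *)
Fixpoint pell (k : nat) (s : seq nat) : bool :=
  match s with
  | [::] => true
  | x :: t =>
      if x == k then
        match t with
        | y :: t' => (y == k) && pell k t'
        | [::] => false
        end
      else (x < k) && pell k t
  end.

Definition agree_outside (P : pred nat) (u v : seq nat) : bool :=
  (size u == size v) &&
  all (fun i => P i || (nth 0 u i == nth 0 v i)) (iota 0 (size u)).

Definition adj_letter (k : nat) (u v : seq nat) : bool :=
  [exists j : 'I_(size u),
     agree_outside (pred1 (val j)) u v &&
     [|| (nth 0 v j == (nth 0 u j).+1) && (nth 0 u j <= k - 2)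
       | (nth 0 u j == (nth 0 v j).+1) && (nth 0 v j <= k - 2)]].

Definition adj_block (k : nat) (u v : seq nat) : bool :=
  [exists j : 'I_(size u),
     (j.+1 < size u) &&
     agree_outside (fun i => (i == val j) || (i == (val j).+1)) u v &&
     [|| [&& nth 0 u j == k.-1, nth 0 u j.+1 == k.-1,
             nth 0 v j == k & nth 0 v j.+1 == k]
       | [&& nth 0 v j == k.-1, nth 0 v j.+1 == k.-1,
             nth 0 u j == k & nth 0 u j.+1 == k]]].

Definition pell_adj (k : nat) (u v : seq nat) : bool :=
  [&& pell k u, pell k v & adj_letter k u v || adj_block k u v].

Definition pell_vertex (n k : nat) (w : n.-tuple 'I_k.+1) : bool :=
  pell k (map val w).

Definition pell_deg (n k : nat) (v : n.-tuple 'I_k.+1) : nat :=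
  #|[set w : n.-tuple 'I_k.+1 | pell_vertex w && pell_adj k (map val v) (map val w)]|.

(* Main.v *)
Require Import Defs.
From mathcomp Require Import all_boot zify.
Set Implicit Arguments. Unset Strict Implicit. Unset Printing Implicit Defensive.

Lemma agree_nth P u w : agree_outside P u w ->
  size u = size w /\ forall i, ~~ P i -> nth 0 u i = nth 0 w i.
Proof.
case/andP=> /eqP Hs /allP Ha; split=> // i Hi.
case: (ltnP i (size u)) => Hiu.
  by have := Ha i; rewrite mem_iota add0n Hiu => /(_ isT); rewrite (negbTE Hi) => /eqP.
by rewrite !nth_default // -Hs.
Qed.

Lemma agree_intro (P : pred nat) u w : size u = size w ->
  (forall i, i < size u -> ~~ P i -> nth 0 u i = nth 0 w i) -> agree_outside P u w.
Proof.
move=> Hs H; apply/andP; split; first by apply/eqP.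
apply/allP=> i; rewrite mem_iota add0n => /= Hi.
by case: (boolP (P i)) => //= HP; rewrite H.
Qed.

Lemma pell_le k s : pell k s -> all (fun x => x <= k) s.
Proof.
move: (leqnn (size s)); elim: (size s) {-2}s => [|N IH] [|x t] //=.
rewrite ltnS => Hs.
case: ifP => [/eqP -> | _].
  case: t Hs => [|y t'] //= Hs /andP[/eqP -> Hp]; rewrite leqnn /=.
  by rewrite IH //; apply: leq_trans (leqnSn _) _; apply: leq_trans Hs.
by case/andP=> Hx Hp; rewrite ltnW //= IH.
Qed.

Lemma pell_lt k s : all (fun x => x < k) s -> pell k s.
Proof.
elim: s => [|x t IH] //= /andP[Hx Ht].
by rewrite ltn_eqF // Hx IH.
Qed.

Lemma tuple_of_seq n k (s : seq nat) : size s = n -> all (fun x => x <= k) s ->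
  exists w : n.-tuple 'I_k.+1, map val w = s.
Proof.
move=> Hs Ha.
have Hs' : size (map (@inord k) s) == n by rewrite size_map Hs.
exists (Tuple Hs') => /=; rewrite -map_comp.
rewrite -[RHS]map_id; apply/eq_in_map => x Hx /=.
by rewrite inordK // ltnS; apply: (allP Ha).
Qed.

Definition fv n k (w : n.-tuple 'I_k.+1) : seq nat := map val w.

Lemma fv_inj n k : injective (@fv n k).
Proof. by move=> w1 w2 /(inj_map val_inj) H; apply: val_inj. Qed.

Lemma nbr_card_le n k (v : n.-tuple 'I_k.+1) (L : seq (seq nat)) :
  (forall w : n.-tuple 'I_k.+1, pell_vertex w -> pell_adj k (map val v) (map val w) ->
      map val w \in L) -> pell_deg v <= size L.
Proof.
move=> H; rewrite /pell_deg cardE -(size_map (@fv n k)).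
apply: uniq_leq_size; first by rewrite map_inj_uniq ?enum_uniq //; apply: fv_inj.
move=> s /mapP[w]; rewrite mem_enum inE => /andP[H1 H2] ->.
exact: H.
Qed.

Lemma nbr_card_ge n k (v : n.-tuple 'I_k.+1) (L : seq (seq nat)) : uniq L ->
  (forall s, s \in L -> size s = n /\ pell_adj k (map val v) s) -> size L <= pell_deg v.
Proof.
move=> Hu H; rewrite /pell_deg cardE -(size_map (@fv n k)).
apply: uniq_leq_size => // s /H [Hs Ha].
have Hps : pell k s by case/and3P: Ha.
have [w Hw] := tuple_of_seq Hs (pell_le Hps).
apply/mapP; exists w; last by rewrite /fv Hw.
by rewrite mem_enum inE /pell_vertex Hw Hps.
Qed.


Definition g k (v : seq nat) (j : nat) (b : bool) : seq nat :=
  if b then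
    (if nth 0 v j <= k - 2 then set_nth 0 v j (nth 0 v j).+1
     else let c := (if nth 0 v j == k.-1 then k else k.-1) in
          set_nth 0 (set_nth 0 v j c) j.+1 c)
  else set_nth 0 v j (nth 0 v j).-1.

Definition glist k v := [seq g k v j b | j <- iota 0 (size v), b <- [:: true; false]].

Lemma size_glist k v : size (glist k v) = 2 * size v.
Proof. by rewrite size_allpairs size_iota mulnC. Qed.

Lemma agree1 j u w : agree_outside (pred1 j) u w -> j < size u ->
  w = set_nth 0 u j (nth 0 w j).
Proof.
move=> /agree_nth [Hs H] Hj; apply: (@eq_from_nth _ 0).
  by rewrite size_set_nth -Hs; apply/esym/maxn_idPr.
move=> i _; rewrite nth_set_nth /=; case: eqP => [-> //|/eqP Hij].
by rewrite H.
Qed.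

Lemma agree2 j u w : agree_outside (fun i => (i == j) || (i == j.+1)) u w -> j.+1 < size u ->
  w = set_nth 0 (set_nth 0 u j (nth 0 w j)) j.+1 (nth 0 w j.+1).
Proof.
move=> /agree_nth [Hs H] Hj; apply: (@eq_from_nth _ 0).
  rewrite !size_set_nth -Hs; apply/esym; lia.
move=> i _; rewrite !nth_set_nth /=.
case: (i =P j.+1) => [->|/eqP Hij1]; first by [].
rewrite nth_set_nth /=.
case: (i =P j) => [->|/eqP Hij]; first by [].
by rewrite H // negb_or Hij Hij1.
Qed.

Lemma nbr_in_glist k u w : 2 <= k -> pell_adj k u w -> w \in glist k u.
Proof.
move=> Hk /and3P[_ _ /orP[]].
  case/existsP=> j /andP[Ha Hc]; have Hw := agree1 Ha (ltn_ord j).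
  case/orP: Hc => /andP[/eqP Hv Hle].
    have -> : w = g k u j true by rewrite /g Hle -Hv.
    by apply: allpairs_f; rewrite ?mem_iota ?inE //= ltn_ord.
  have -> : w = g k u j false by rewrite /g Hv /= -Hw.
  by apply: allpairs_f; rewrite ?mem_iota ?inE //= ltn_ord.
case/existsP=> j /andP[/andP[Hj1 Ha] Hc]; have Hw := agree2 Ha Hj1.
have -> : w = g k u j true.
  rewrite /g; case/orP: Hc => /and4P[/eqP H1 /eqP H2 /eqP H3 /eqP H4].
    have -> : (nth 0 u j <= k - 2) = false by rewrite H1; apply/negbTE; rewrite -ltnNge; lia.
    by rewrite H1 eqxx {1}Hw H3 H4.
  rewrite H3; have -> : (k <= k - 2) = false by apply/negbTE; rewrite -ltnNge; lia.
  have -> : (k == k.-1) = false by apply/negbTE; lia.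
  by rewrite {1}Hw H1 H2.
by apply: allpairs_f; rewrite ?mem_iota ?inE //= ltn_ord.
Qed.

Lemma deg_le n k (v : n.-tuple 'I_k.+1) : 2 <= k -> pell_deg v <= 2 * n.
Proof.
move=> Hk; have -> : 2 * n = size (glist k (map val v)) by rewrite size_glist size_map size_tuple.
by apply: nbr_card_le => w _ Ha; apply: nbr_in_glist.
Qed.


Fixpoint low (k : nat) (s : seq nat) : seq (seq nat) :=
  match s with
  | [::] => [::]
  | x :: t =>
    if x == k then
      match t with
      | [::] => [::]
      | y :: t' => (k.-1 :: k.-1 :: t') :: map (fun w => x :: y :: w) (low k t')
      end
    else (if x == 0 then 1 :: t else x.-1 :: t) :: map (cons x) (low k t)
  end.

Definition adj' k u w := adj_letter k u w || adj_block k u w.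

Lemma adj_cons k x u w : adj' k u w -> adj' k (x :: u) (x :: w).
Proof.
case/orP=> [/existsP[j /andP[Ha Hc]]|/existsP[j /andP[/andP[Hj Ha] Hc]]].
  have hj : j.+1 < size (x :: u) by rewrite /= ltnS ltn_ord.
  apply/orP; left; apply/existsP; exists (Ordinal hj) => /=.
  rewrite Hc andbT; have [Hs H] := agree_nth Ha.
  apply: agree_intro => [/=|[|i] _ /= Hi]; first by rewrite Hs.
    by [].
  by apply: H.
have hj : j.+1 < size (x :: u) by rewrite /= ltnS ltn_ord.
apply/orP; right; apply/existsP; exists (Ordinal hj) => /=.
rewrite Hc andbT ltnS Hj /=; have [Hs H] := agree_nth Ha.
apply: agree_intro => [/=|[|i] _ /= Hi]; first by rewrite Hs.
  by [].
by apply: H.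
Qed.

Lemma low_prop k s : 2 <= k -> pell k s ->
  [/\ uniq (low k s), uphalf (size s) <= size (low k s) &
      forall w, w \in low k s -> size w = size s /\ pell k w /\ adj' k s w].
Proof.
move=> Hk; move: (leqnn (size s)); elim: (size s) {-2}s => [|N IH] [|x t] //=.
rewrite ltnS => Hs.
case: ifP => [/eqP Ex | Nx].
  case: t Hs => [|y t'] //= Hs /andP[/eqP Ey Hp].
  have [IHu IHs IHw] := IH t' (ltnW Hs) Hp.
  split.
  - rewrite /= map_inj_uniq ?IHu ?andbT; last by move=> a b [].
    apply/mapP => -[w _] [] /eqP; rewrite Ex; lia.
  - by rewrite size_map.
  move=> w; rewrite inE => /orP[/eqP ->|/mapP[w' Hw' ->]].
    split=> //; split; first by rewrite /= ltn_eqF ?ltn_predL ?(leq_trans _ Hk) //= ltn_predL (leq_trans _ Hk).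
    apply/orP; right; apply/existsP.
    have hj : 1 < size [:: x, y & t'] by [].
    exists (Ordinal (ltn0Sn _ : 0 < size [:: x, y & t'])) => /=.
    rewrite Ex Ey !eqxx /= orbT andbT.
    by apply: agree_intro => [//|[|[|i]] //].
  have [Hs1 [Hp1 Ha1]] := IHw w' Hw'.
  split; first by rewrite /= Hs1.
  split; first by rewrite /= Ex Ey !eqxx.
  by rewrite Ex Ey; do 2! apply: adj_cons.
case/andP=> Hx Hp.
have [IHu IHs IHw] := IH t Hs Hp.
split.
- rewrite /= map_inj_uniq ?IHu ?andbT; last by move=> a b [].
  by apply/mapP => -[w _]; case: ifP => /eqP Hx0 [] Hxx _; lia.
- rewrite /= size_map ltnS; apply: leq_trans IHs; rewrite uphalf_half; lia.
move=> w; rewrite inE => /orP[/eqP ->|/mapP[w' Hw' ->]].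
  split; first by case: ifP.
  split.
    case: ifP => _ /=; rewrite ltn_eqF ?Hp ?andbT //; lia.
  apply/orP; left; apply/existsP; exists (Ordinal (ltn0Sn _ : 0 < size (x :: t))) => /=.
  apply/andP; split; first by apply: agree_intro => [|[|i]]; case: ifP.
  case: ifP => [/eqP -> | /negbT Hx0] /=.
    by [].
  by apply/orP; right; rewrite prednK ?lt0n // eqxx /=; lia.
have [Hs1 [Hp1 Ha1]] := IHw w' Hw'.
split; first by rewrite /= Hs1.
split; first by rewrite /= Nx Hx.
by apply: adj_cons.
Qed.

Lemma deg_ge n k (v : n.-tuple 'I_k.+1) : 2 <= k -> pell_vertex v -> uphalf n <= pell_deg v.
Proof.
move=> Hk Hv; have [Hu Hs Hw] := low_prop Hk Hv.
rewrite size_map size_tuple in Hs.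
apply: leq_trans Hs _; apply: nbr_card_ge => // s /Hw [H1 [H2 H3]].
by rewrite H1 size_map size_tuple; split => //; rewrite /pell_adj -/(pell_vertex v) Hv H2.
Qed.


Lemma pell_run k s a b : 0 < k -> pell k s -> (a == 0) || (nth 0 s a.-1 != k) ->
  (forall i, a <= i < a + b -> nth 0 s i = k) -> nth 0 s (a + b) != k -> ~~ odd b.
Proof.
move=> Hk; move: (leqnn (size s)); elim: (size s) {-2}s a b => [|N IH] [|x t] a b //=.
- move=> _ _ _ H _; case: b H => [//|b] H.
  by have := H a; rewrite nth_nil => /(_ ltac:(lia)); lia.
- move=> _ _ _ H _; case: b H => [//|b] H.
  by have := H a; rewrite nth_nil => /(_ ltac:(lia)); lia.
rewrite ltnS => Hs.
case: ifP => [/eqP Ex | Nx].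
  case: t Hs => [|y t'] //= Hs /andP[/eqP Ey Hp].
  case: a => [|[|a']] /= Hc H He.
  - case: b H He => [//|[|b']] H He.
      by move: He; rewrite /= Ey eqxx.
    rewrite /= negbK.
    apply: (IH t' 0 b') => //; first by apply: leq_trans (leqnSn _) _; apply: leq_trans Hs.
    by move=> i Hi; have := H i.+2; rewrite /=; apply; lia.
  - by move: Hc; rewrite Ex eqxx.
  - apply: (IH t' a' b) => //; first by apply: leq_trans (leqnSn _) _; apply: leq_trans Hs.
    + by case: a' Hc {H He}.
    + by move=> i Hi; have := H i.+2; rewrite /=; apply; lia.
case/andP=> Hx Hp.
case: a => [|a'] /= Hc H He.
  case: b H He => [//|b'] H He.
  by have := H 0 isT; move/eqP: Nx.
apply: (IH t a' b) => //.
- by case: a' Hc {H He}.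
- by move=> i Hi; have := H i.+1; rewrite /=; apply; lia.
Qed.


Lemma set_nth_len (s : seq nat) j a : j < size s -> size (set_nth 0 s j a) = size s.
Proof. by move=> H; rewrite size_set_nth; apply/maxn_idPr. Qed.

Lemma all_set_nth (P : pred nat) (s : seq nat) j a : all P s -> P a -> j < size s ->
  all P (set_nth 0 s j a).
Proof.
move=> /all_nthP H Pa Hj; apply/(all_nthP 0) => i; rewrite set_nth_len // => Hi.
by rewrite nth_set_nth /=; case: eqP => // _; apply: H.
Qed.

Lemma max_list n k : 3 <= k ->
  uniq (glist k (nseq n 1)) /\
  forall s, s \in glist k (nseq n 1) -> size s = n /\ pell_adj k (nseq n 1) s.
Proof.
move=> Hk.
have Hg : forall j b, j < n -> g k (nseq n 1) j b = set_nth 0 (nseq n 1) j (if b then 2 else 0).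
  move=> j b Hj; rewrite /g nth_nseq Hj.
  by case: b => //; rewrite (_ : 1 <= k - 2) //; lia.
split.
  apply: allpairs_uniq; first exact: iota_uniq; first by [].
  move=> [j1 b1] [j2 b2] H1 H2 /=.
  have Hj1 : j1 < n.
    by case/allpairsP: H1 => -[x y] /= [Hx _ [-> _]]; move: Hx; rewrite mem_iota size_nseq.
  have Hj2 : j2 < n.
    by case/allpairsP: H2 => -[x y] /= [Hx _ [-> _]]; move: Hx; rewrite mem_iota size_nseq.
  rewrite !Hg // => E; have := congr1 (fun s => nth 0 s j1) E.
  rewrite !nth_set_nth /= eqxx; case: (j1 =P j2) => [<-|_].
    by case: b1 b2 {E} H1 H2 => [] [].
  by rewrite nth_nseq Hj1; case: ifP.
move=> s /allpairsP[[j b] /= [Hj Hb ->]].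
rewrite mem_iota size_nseq in Hj; rewrite Hg; last by lia.
have Hj' : j < size (nseq n 1) by rewrite size_nseq; lia.
split; first by rewrite set_nth_len // size_nseq.
rewrite /pell_adj; apply/and3P; split.
- by apply: pell_lt; apply/allP => x; rewrite mem_nseq => /andP[_ /eqP ->]; lia.
- apply: pell_lt; apply: all_set_nth => //; last by case: ifP; lia.
  by apply/allP => x; rewrite mem_nseq => /andP[_ /eqP ->]; lia.
apply/orP; left; apply/existsP; exists (Ordinal Hj') => /=.
apply/andP; split.
  apply: agree_intro; first by rewrite set_nth_len.
  by move=> i _ Hi; rewrite nth_set_nth /=; case: eqP Hi => // ->; rewrite /= eqxx.
rewrite nth_set_nth /= eqxx nth_nseq (_ : j < n); last by lia.
by clear Hb; case: b; apply/orP; [left|right]; rewrite /=; lia.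
Qed.


Definition vmin k n := nseq (n./2).*2 k ++ nseq (odd n) 0.

Lemma nth_vmin k n i : nth 0 (vmin k n) i = if i < (n./2).*2 then k else 0.
Proof.
by rewrite /vmin nth_cat size_nseq !nth_nseq if_same; case: (i < (n./2).*2).
Qed.

Lemma size_vmin k n : size (vmin k n) = n.
Proof. by rewrite /vmin size_cat !size_nseq addnC odd_double_half. Qed.

Lemma pell_vmin k n : 0 < k -> pell k (vmin k n).
Proof.
move=> Hk; rewrite /vmin; elim: (n./2) => [|m IH] /=.
  by apply: pell_lt; case: (odd n) => //=; rewrite Hk.
by rewrite -[k == k]/(eqn k k) eqnE eqxx /= IH.
Qed.

Definition Lmin k n := [seq g k (vmin k n) (i.*2) true | i <- iota 0 n./2] ++
  (if odd n then [:: g k (vmin k n) (n./2).*2 true] else [::]).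

Lemma size_Lmin k n : size (Lmin k n) = uphalf n.
Proof. by rewrite size_cat size_map size_iota uphalf_half addnC; case: (odd n). Qed.

Lemma adj_neq k u w : 0 < k -> adj' k u w -> u != w.
Proof.
move=> Hk; apply: contraL => /eqP <-; apply/norP; split.
  apply/existsP => -[j /andP[_]]; case/orP => /andP[/eqP H _]; lia.
apply/existsP => -[j /andP[_]]; case/orP => /and4P[/eqP H1 _ /eqP H3 _]; lia.
Qed.

Lemma odd_aux a b : b < a -> odd (a.*2 - (b.*2).+1).
Proof.
move=> H; have -> : a.*2 - (b.*2).+1 = ((a - b.+1).*2).+1 by lia.
by rewrite /= odd_double.
Qed.

Lemma min_nbr k n w : 3 <= k -> pell_adj k (vmin k n) w -> size w = n -> w \in Lmin k n.
Proof.
move=> Hk Ha Hsw.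
have := nbr_in_glist (ltnW Hk) Ha.
case/allpairsP => -[j b] /= [Hj Hb Ew].
rewrite mem_iota size_vmin /= in Hj.
have Hpw : pell k w by case/and3P: Ha.
set M := (n./2).*2.
have HnM : n = M + odd n by rewrite /M addnC odd_double_half.
case: (ltnP j M) => HjM.
-
  have Hvj : nth 0 (vmin k n) j = k by rewrite nth_vmin HjM.
  case: b Hb Ew => _ Ew.
  + have Hle : (k <= k - 2) = false by apply/negbTE; rewrite -ltnNge; lia.
    have Hne : (k == k.-1) = false by apply/negbTE; lia.
    move: Ew; rewrite /g Hvj Hle Hne /= => Ew.
    have Hnw : forall i, nth 0 w i = if (i == j) || (i == j.+1) then k.-1
                                     else if i < M then k else 0.
      move=> i; rewrite Ew nth_set_nth /=; case: (i =P j.+1) => _; rewrite ?orbT ?orbF //.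
      by rewrite nth_set_nth /=; case: (i =P j) => // _; rewrite nth_vmin.
    have Hev : ~~ odd j.
      apply: (@pell_run k w 0 j) => //; first by lia.
      - move=> i Hi; rewrite Hnw; (have -> : (i == j) = false by lia);
          (have -> : (i == j.+1) = false by lia); rewrite /=; case: ifP => //; lia.
      - by rewrite add0n Hnw eqxx /=; lia.
    have Hj2 : j = (j./2).*2 by rewrite -{1}(odd_double_half j) (negbTE Hev).
    have HjM1 : j.+1 < M by lia.
    rewrite mem_cat; apply/orP; left; apply/mapP; exists j./2.
      by rewrite mem_iota; lia.
    by rewrite -Hj2 Ew /g Hvj Hle Hne.
  + move: Ew; rewrite /g Hvj /= => Ew.
    have Hnw : forall i, nth 0 w i = if i == j then k.-1 else if i < M then k else 0.
      by move=> i; rewrite Ew nth_set_nth /=; case: (i =P j) => // _; rewrite nth_vmin.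
    have Hev : ~~ odd j.
      apply: (@pell_run k w 0 j) => //; first by lia.
      - move=> i Hi; rewrite Hnw; (have -> : (i == j) = false by lia); rewrite /=; case: ifP => //; lia.
      - by rewrite add0n Hnw eqxx /=; lia.
    have Hodd : ~~ odd (M - j.+1).
      apply: (@pell_run k w j.+1 (M - j.+1)) => //; first by lia.
      - by rewrite /= Hnw eqxx; lia.
      - move=> i Hi; rewrite Hnw; (have -> : (i == j) = false by lia); rewrite /=; case: ifP => //; lia.
      - rewrite Hnw; (have -> : (j.+1 + (M - j.+1) == j) = false by lia).
        by case: ifP => //; lia.
    move: Hodd; rewrite /M -(odd_double_half j) (negbTE Hev) add0n odd_aux //; lia.
-
  have HjE : j = M by lia.
  have Hodd : odd n by move: Hj HjM; rewrite {1}HnM; case: (odd n) => //=; lia.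
  have Hvj : nth 0 (vmin k n) j = 0 by rewrite nth_vmin ltnNge HjM.
  case: b Hb Ew => _ Ew.
  + rewrite mem_cat Hodd inE Ew HjE; apply/orP; right; apply/eqP; reflexivity.
  + exfalso; move: Ew; rewrite /g Hvj /= => Ew.
    have Ev : w = vmin k n.
      rewrite Ew; apply: (@eq_from_nth _ 0); first by rewrite set_nth_len ?size_vmin.
      by move=> i _; rewrite nth_set_nth /=; case: eqP => // ->.
    case/and3P: Ha => _ _ /(adj_neq (ltnW (ltnW Hk))); rewrite Ev eqxx //.
Qed.

Theorem corollary5p5 (n k : nat) : 1 <= n -> 3 <= k ->
  ((exists2 v : n.-tuple 'I_k.+1, pell_vertex v & pell_deg v = 2 * n) /\
   (forall v : n.-tuple 'I_k.+1, pell_vertex v -> pell_deg v <= 2 * n)) /\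
  ((exists2 v : n.-tuple 'I_k.+1, pell_vertex v & pell_deg v = uphalf n) /\
   (forall v : n.-tuple 'I_k.+1, pell_vertex v -> uphalf n <= pell_deg v)).
Proof.
move=> Hn Hk.
have Hk2 : 2 <= k by lia.
split; split.
- have Hall : all (fun x => x <= k) (nseq n 1).
    by apply/allP => x; rewrite mem_nseq => /andP[_ /eqP ->]; lia.
  have [v Hv] := tuple_of_seq (size_nseq n 1) Hall.
  have [Hu Hs] := max_list n Hk.
  exists v.
    rewrite /pell_vertex Hv; apply: pell_lt.
    by apply/allP => x; rewrite mem_nseq => /andP[_ /eqP ->]; lia.
  apply/eqP; rewrite eqn_leq deg_le //=.
  have -> : 2 * n = size (glist k (nseq n 1)) by rewrite size_glist size_nseq.
  by apply: nbr_card_ge => // s; rewrite Hv; exact: Hs.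
- by move=> v _; apply: deg_le.
- have Hp : pell k (vmin k n) by apply: pell_vmin; lia.
  have [v Hv] := tuple_of_seq (size_vmin k n) (pell_le Hp).
  exists v; first by rewrite /pell_vertex Hv.
  apply/eqP; rewrite eqn_leq deg_ge ?andbT; last by rewrite /pell_vertex Hv.
    rewrite -(size_Lmin k n); apply: nbr_card_le => w _ Ha.
    by rewrite Hv in Ha; apply: min_nbr => //; rewrite size_map size_tuple.
  by [].
- by move=> v Hv; apply: deg_ge.
Qed.
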